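(* Let $n$, $k$, $t$ be positive integers with $k\geq t+1$ and $n\geq 2k$, and let $V$ be an $n$-dimensional vector space over $\mathbb{F}_q$. Suppose $\mathcal{F}\subseteq{V\brack k}$ is an almost $t$-intersecting family with $\tau_t(\mathcal{F})<k$ which has a unique $t$-cover $T$ of dimension $\tau_t(\mathcal{F})$. If $A$ is a subspace of $V$ with $\dim(A)<\tau_t(\mathcal{F})$ and $\dim(A\cap T)\geq t$, then $$|(\mathcal{F}\setminus\mathcal{F}_T)_A|\leq{k-t+1\brack 1}^{\tau_t(\mathcal{F})-\dim(A)+1}{n-\tau_t(\mathcal{F})-1\brack k-\tau_t(\mathcal{F})-1}+\sum_{i=0}^{\tau_t(\mathcal{F})-\dim(A)}{k-t+1\brack 1}^{i}.$$
   Context: $q$ is a prime power; ${W\brack k}$ is the set of $k$-dimensional subspaces of $W$ and ${m\brack r}$ the Gaussian binomial coefficient $\prod_{i=0}^{r-1}\frac{q^{m-i}-1}{q^{r-i}-1}$ (equal to $1$ for $r=0$). A family $\mathcal{F}\subseteq{V\brack k}$ is almost $t$-intersecting if for each $F\in\mathcal{F}$ there is at most one $F'\in\mathcal{F}$ with $\dim(F\cap F')<t$. A subspace $W$ is a $t$-cover of $\mathcal{F}$ if $\dim(W\cap F)\geq t$ for all $F\in\mathcal{F}$; $\tau_t(\mathcal{F})$ is the minimum dimension of a $t$-cover of $\mathcal{F}$. For a family $\mathcal{B}$ and subspace $A$, $\mathcal{B}_A=\{F\in\mathcal{B}: A\subseteq F\}$. *)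

(* Defs.v *)
From HB Require Import structures.
From mathcomp Require Import all_boot all_order all_algebra all_field.
Set Implicit Arguments. Unset Strict Implicit. Unset Printing Implicit Defensive.
Import GRing.Theory.
Local Open Scope ring_scope.

Section FinVspace.
Import VectorInternalTheory.
Variables (F : finFieldType) (vT : vectType F).
HB.instance Definition _ := [Countable of {vspace vT} by <:].
HB.instance Definition _ := [Finite of {vspace vT} by <:].
End FinVspace.

Definition gbin (q m r : nat) : rat :=
  \prod_(i < r) (((q ^ (m - i))%:R - 1) / ((q ^ (r - i))%:R - 1)).

Section Families.
Variables (F : finFieldType) (vT : vectType F).

Definition almost_t_intersecting (t : nat) (fam : {set {vspace vT}}) : Prop :=
  forall X, X \in fam -> (#|[set Y in fam | (\dim (X :&: Y)%VS < t)%N]| <= 1)%N.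

Definition t_cover (t : nat) (fam : {set {vspace vT}}) (W : {vspace vT}) : bool :=
  [forall X in fam, (t <= \dim (W :&: X)%VS)%N].

Definition tau (t : nat) (fam : {set {vspace vT}}) : nat :=
  \big[minn/(\dim (fullv : {vspace vT}))]_(W : {vspace vT} | t_cover t fam W) \dim W.

Definition fam_minus_T_A (fam : {set {vspace vT}}) (T A : {vspace vT}) :=
  [set X in fam | ~~ (T <= X)%VS & (A <= X)%VS].
End Families.

(* Main.v *)
Require Import Defs.
From HB Require Import structures.
From mathcomp Require Import all_boot all_order all_algebra all_field.
From mathcomp Require Import zify ring.
Set Implicit Arguments. Unset Strict Implicit. Unset Printing Implicit Defensive.
Import Order.TTheory GRing.Theory Num.Theory.
Local Open Scope ring_scope.


Lemma card_vs0 (F : finFieldType) (s : Type) (cls : Vector.axioms_ F s) (U : {vspace Vector.Pack cls}) :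
 #|[pred v : finvect_type (Vector.Pack cls) | (v : Vector.Pack cls) \in U]| = (#|F| ^ \dim U)%N.
Proof. pose U' : {vspace finvect_type (Vector.Pack cls)} := U. have := card_vspace U'. apply. Qed.
Lemma card_vs (F : finFieldType) (vT : vectType F) (U : {vspace vT}) :
 #|[pred v : finvect_type vT | (v : vT) \in U]| = (#|F| ^ \dim U)%N.
Proof. case: vT U => s cls U. exact: card_vs0. Qed.

Lemma card_bigcup_le (I T : finType) (P : pred I) (f : I -> {set T}) :
  (#|\bigcup_(i | P i) f i| <= \sum_(i | P i) #|f i|)%N.
Proof.
apply: (big_ind2 (fun (A : {set T}) n => #|A| <= n)%N) => //.
- by rewrite cards0.
- move=> A1 n1 A2 n2 h1 h2; apply: leq_trans (leq_card_setU A1 A2) _.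
  exact: leq_add.
Qed.

Section Lin.
Variables (K : fieldType) (vT : vectType K).
Implicit Types U V W L : {vspace vT}.

Lemma dim_add_line U (v : vT) : v \notin U -> \dim (U + <[v]>)%VS = (\dim U).+1.
Proof.
move=> vU; apply/eqP; rewrite eqn_leq; apply/andP; split.
  have h : (\dim (U + <[v]>) <= \dim U + \dim <[v]>)%N by rewrite -dimv_sum_cap leq_addr.
  apply: leq_trans h _; rewrite -addn1 leq_add2l dim_vline; by case: (v != 0).
have := dimv_leqif_sup (addvSl U <[v]>).
move/ltn_leqif => ->; apply/negP => /subvP h; apply/negP: vU; rewrite negbK.
by apply: h; rewrite memvE addvSr.
Qed.

Lemma line_unique U L (v : vT) : (U <= L)%VS -> \dim L = (\dim U).+1 ->
  v \in L -> v \notin U -> L = (U + <[v]>)%VS.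
Proof.
move=> UL dL vL vU; apply/eqP; rewrite eq_sym eqEdim dim_add_line // dL leqnn andbT.
by rewrite subv_add UL -memvE.
Qed.

Lemma exists_subdim U m : (m <= \dim U)%N -> exists2 Z, (Z <= U)%VS & \dim Z = m.
Proof.
elim: m => [|m IH] hm; first by exists 0%VS; rewrite ?sub0v ?dimv0.
have [Z ZU dZ] := IH (ltnW hm).
have : ~~ (U <= Z)%VS.
  apply/negP => /dimvS; rewrite dZ; by rewrite leqNgt hm.
case/subvPn => u uU uZ; exists (Z + <[u]>)%VS; last by rewrite dim_add_line // dZ.
by rewrite subv_add ZU -memvE.
Qed.
End Lin.


Lemma sum_bool_card (T : finType) (A : pred T) (B : pred T) :
  (\sum_(x in A) (B x : nat))%N = #|[set x | (x \in A) && B x]|.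
Proof. by rewrite -sum1dep_card big_mkcondr; apply: eq_bigr => x _; case: (B x). Qed.

Lemma gbin0 q m : gbin q m 0 = 1.
Proof. by rewrite /gbin big_ord0. Qed.

Lemma gbin1 q m : gbin q m 1 = ((q ^ m)%:R - 1) / (q%:R - 1).
Proof. by rewrite /gbin big_ord1 /= !subn0 expn1. Qed.

Lemma qpow_neq1 q r : (1 < q)%N -> ((q ^ r.+1)%:R - 1 : rat) != 0.
Proof.
move=> q1; rewrite subr_eq0 pnatr_eq1; apply/negP => /eqP h.
have : (1 ^ r.+1 < q ^ r.+1)%N by rewrite ltn_exp2r.
by rewrite h exp1n.
Qed.

Lemma gbinS q m r : (1 < q)%N ->
  gbin q m r.+1 * gbin q r.+1 1 = gbin q m 1 * gbin q m.-1 r.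
Proof.
move=> q1; rewrite /gbin big_ord_recl big_ord1 /= !subn0 expn1.
have -> : \prod_(i < r) (((q ^ (m - bump 0 i))%:R - 1) / ((q ^ (r.+1 - bump 0 i))%:R - 1) : rat)
   = \prod_(i < r) (((q ^ (m.-1 - i))%:R - 1) / ((q ^ (r - i))%:R - 1)).
  by apply: eq_bigr => i _; rewrite /bump /= add1n subSS subnS predn_sub.
have := qpow_neq1 r q1.
set b := ((q ^ r.+1)%:R - 1 : rat); set P := \prod_(i < r) _.
move=> bnz.
by rewrite mulrAC -!mulrA mulKf // big_ord1 /= !subn0 expn1 !mulrA.
Qed.

Section Count.
Variables (F : finFieldType) (vT : vectType F).
Local Notation fvT := (finvect_type vT).
Local Notation q := #|F|.
Implicit Types U W X L : {vspace vT}.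

Definition lines U W := [set L : {vspace vT} | (U <= L)%VS && (L <= W)%VS && (\dim L == (\dim U).+1)].

Lemma card_diff U W : (U <= W)%VS ->
  #|[set v : fvT | ((v : vT) \in W) && ((v : vT) \notin U)]| = (q ^ \dim W - q ^ \dim U)%N.
Proof.
move=> UW; rewrite -(card_vs W) -(card_vs U).
rewrite -(cardID [pred v : fvT | (v:vT) \in U] [pred v : fvT | (v:vT) \in W]).
have -> : #|[predI [pred v : fvT | (v:vT) \in W] & [pred v : fvT | (v:vT) \in U]]|
    = #|[pred v : fvT | (v:vT) \in U]|.
  apply: eq_card => v /=; rewrite !inE /=.
  by apply/andP/idP => [[]//|h]; split => //; exact: (subvP UW).
by rewrite addKn; apply: eq_card => v; rewrite !inE /= andbC.
Qed.

Lemma lines_count U W : (U <= W)%VS ->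
  (#|lines U W| * (q ^ (\dim U).+1 - q ^ \dim U) = q ^ \dim W - q ^ \dim U)%N.
Proof.
move=> UW; rewrite -(card_diff UW).
set D := [set v : fvT | _]; rewrite -(sum1_card (mem D)).
transitivity (\sum_(v in D) \sum_(L in lines U W) (((v : vT) \in L) : nat))%N; last first.
  apply: eq_bigr => v; rewrite inE => /andP[vW vU].
  rewrite (bigD1 (U + <[v : vT]>)%VS) /=; last first.
    by rewrite inE addvSl subv_add UW -memvE vW dim_add_line // eqxx.
  have -> : (v:vT) \in (U + <[v:vT]>)%VS by rewrite memvE addvSr.
  rewrite big1 // => L /andP[]; rewrite inE => /andP[/andP[UL _] /eqP dL] LD.
  apply/eqP; rewrite eqb0; apply/negP => vL; move/eqP: LD; apply.
  exact: line_unique.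
rewrite exchange_big /= -sum_nat_const; apply: eq_bigr => L.
rewrite inE => /andP[/andP[UL LW] /eqP dL].
rewrite sum_bool_card -dL -(card_diff UL); apply: eq_card => v; rewrite !inE.
apply/idP/idP => [/andP[vL vU]|/andP[/andP[_ vU] vL]]; last by rewrite vL vU.
by rewrite vL vU (subvP LW).
Qed.
End Count.

Section Count2.
Variables (F : finFieldType) (vT : vectType F).
Local Notation q := #|F|.
Implicit Types U W X L : {vspace vT}.

Lemma q_gt1 : (1 < q)%N.
Proof. exact: finNzRing_gt1. Qed.

Lemma lines_count_rat U W : (U <= W)%VS ->
  (#|lines U W|%:R : rat) = gbin q (\dim W - \dim U) 1.
Proof.
move=> UW; have := lines_count UW.
have uw := dimvS UW.
rewrite -(subnKC uw); set d := (\dim W - \dim U)%N; set u := \dim U.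
rewrite expnS expnD -{2}[(q ^ u)%N]mul1n -mulnBl -{3}[(q ^ u)%N]muln1 -mulnBr.
rewrite mulnA [X in _ = X -> _]mulnC addKn => /eqP; rewrite eqn_pmul2r ?expn_gt0 ?(ltnW q_gt1) // => /eqP h.
rewrite gbin1; have qnz : ((q%:R : rat) - 1) != 0.
  by rewrite subr_eq0 pnatr_eq1; apply/negP => /eqP h1; have := q_gt1; rewrite h1.
apply: (mulIf qnz); rewrite divfK //.
have h1 : (1 <= q)%N by exact: ltnW q_gt1.
have h2 : (1 <= q ^ d)%N by rewrite expn_gt0 ltnW // q_gt1.
by rewrite -(natrB _ h1) -(natrB _ h2) -natrM h.
Qed.

Lemma count_sub r : forall U W, (U <= W)%VS ->
  (#|[set X : {vspace vT} | (U <= X)%VS && (X <= W)%VS && (\dim X == \dim U + r)%N]|%:R : rat)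
   = gbin q (\dim W - \dim U) r.
Proof.
elim: r => [|r IH] U W UW.
  rewrite gbin0.
  have -> : [set X : {vspace vT} | (U <= X)%VS && (X <= W)%VS && (\dim X == \dim U + 0)%N] = [set U].
    apply/setP => X; rewrite !inE addn0.
    apply/idP/eqP => [/andP[/andP[UX _] dX]|->]; last by rewrite subvv UW eqxx.
    by apply/eqP; rewrite eq_sym eqEdim UX (eqP dX) leqnn.
  by rewrite cards1.
set Q := [set X : {vspace vT} | _].
have key : (\sum_(X in Q) #|lines U X| =
    \sum_(L in lines U W) #|[set X : {vspace vT} | (L <= X)%VS && (X <= W)%VS && (\dim X == \dim L + r)%N]|)%N.
  transitivity (\sum_(X in Q) \sum_(L in lines U W) ((L <= X)%VS : nat))%N.
    apply: eq_bigr => X; rewrite inE => /andP[/andP[UX XW] _].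
    rewrite sum_bool_card; apply: eq_card => L; rewrite !inE.
    apply/idP/idP => [/andP[/andP[UL LX] dL]|/andP[/andP[/andP[UL LW] dL] LX]].
      by rewrite UL LX dL (subv_trans LX XW).
    by rewrite UL LX dL.
  rewrite exchange_big /=; apply: eq_bigr => L; rewrite inE => /andP[/andP[UL LW] /eqP dL].
  rewrite sum_bool_card; apply: eq_card => X; rewrite !inE dL addSnnS.
  apply/idP/idP => [/andP[/andP[/andP[UX XW] dX] LX]|/andP[/andP[LX XW] dX]].
    by rewrite LX XW dX.
  by rewrite XW dX LX (subv_trans UL LX).
have := congr1 (fun m => (m%:R : rat)) key; rewrite /= !natr_sum.
rewrite (eq_bigr (fun _ => gbin q r.+1 1)); last first.
  move=> X; rewrite inE => /andP[/andP[UX XW] /eqP dX].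
  by rewrite lines_count_rat // dX addKn.
rewrite [X in _ = X -> _](eq_bigr (fun _ => gbin q (\dim W - \dim U).-1 r)); last first.
  move=> L; rewrite inE => /andP[/andP[UL LW] /eqP dL].
  by rewrite IH // dL subnS.
rewrite !sumr_const => h.
have nz : gbin q r.+1 1 != 0.
  rewrite gbin1 mulf_neq0 ?invr_neq0 ?qpow_neq1 ?q_gt1 //.
  have := qpow_neq1 0 q_gt1; by rewrite expn1.
apply: (mulIf nz); rewrite gbinS ?q_gt1 // -(lines_count_rat UW).
by rewrite mulrC [X in _ = X]mulrC !mulr_natr.
Qed.
End Count2.


Lemma gbin_ge0 q m r : (0 < q)%N -> 0 <= gbin q m r.
Proof.
move=> q0; rewrite /gbin; apply: prodr_ge0 => i _; apply: divr_ge0;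
  by rewrite subr_ge0 ler1n expn_gt0 q0.
Qed.

Section Main.
Variables (F : finFieldType) (vT : vectType F).
Local Notation q := #|F|.

Lemma tau_le t (fam : {set {vspace vT}}) W : t_cover t fam W -> (tau t fam <= \dim W)%N.
Proof.
rewrite /tau => h; elim: (index_enum _) (mem_index_enum W) => [//|a s IH].
rewrite inE big_cons => /orP[/eqP<-|ins]; first by rewrite h geq_minl.
case: ifP => _; last exact: IH.
exact: leq_trans (geq_minr _ _) (IH ins).
Qed.

Lemma step k t (fam : {set {vspace vT}}) T A M :
  (forall X, X \in fam -> \dim X = k) -> almost_t_intersecting t fam -> (t < k)%N ->
  (t <= \dim A)%N -> ~~ t_cover t fam A ->
  (forall B, (A <= B)%VS -> \dim B = (\dim A).+1 -> (#|fam_minus_T_A fam T B|%:R : rat) <= M) ->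
  (#|fam_minus_T_A fam T A|%:R : rat) <= 1 + gbin q (k - t + 1) 1 * M.
Proof.
move=> dimk ati tk tA ncov hB.
have [F0 F0f sF0] : exists2 F0, F0 \in fam & (\dim (A :&: F0) < t)%N.
  move: ncov; rewrite /t_cover => /forallPn [X]; rewrite negb_imply -ltnNge.
  by case/andP => Xf h; exists X.
set Z0 := (F0 :\: A)%VS.
have dZ0 : (k - t + 1 <= \dim Z0)%N.
  have := dimv_cap_compl F0 A; rewrite (dimk F0 F0f) => h; rewrite capvC in sF0; rewrite /Z0; lia.
have [Z ZZ0 dZ] := exists_subdim dZ0.
have ZF0 : (Z <= F0)%VS by apply: subv_trans ZZ0 (diffvSl F0 A).
have ZA : (A :&: Z = 0)%VS.
  apply/eqP; rewrite -subv0 -(capv_diff F0 A) capvC capvS //.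
set Bad := [set Y in fam | (\dim (F0 :&: Y) < t)%N].
have cBad : (#|Bad| <= 1)%N := ati F0 F0f.
set Ls := lines (0%VS : {vspace vT}) Z.
have cLs : (#|Ls|%:R : rat) = gbin q (k - t + 1) 1.
  by rewrite lines_count_rat ?sub0v // dimv0 subn0 dZ.
have sub : fam_minus_T_A fam T A \subset Bad :|: \bigcup_(L in Ls) fam_minus_T_A fam T (A + L)%VS.
  apply/subsetP => Y; rewrite inE => /andP[Yf /andP[TY AY]].
  rewrite inE; case: (ltnP (\dim (F0 :&: Y)) t) => h; first by rewrite inE Yf h.
  apply/orP; right.
  have : (0 < \dim ((F0 :&: Y) :&: Z))%N.
    have := dimv_sum_cap (F0 :&: Y) Z.
    have : (\dim ((F0 :&: Y) + Z) <= k)%N.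
      by rewrite -(dimk F0 F0f) dimvS // subv_add capvSl ZF0.
    lia.
  rewrite lt0n dimv_eq0 -vpick0 => nz.
  have := memv_pick ((F0 :&: Y) :&: Z)%VS.
  set x := vpick _; rewrite !memv_cap => /andP[/andP[xF0 xY] xZ].
  apply/bigcupP; exists <[x]>%VS.
    by rewrite inE sub0v -memvE xZ dimv0 dim_vline nz.
  by rewrite inE Yf TY subv_add AY -memvE xY.
have hN : (#|fam_minus_T_A fam T A| <= 1 + \sum_(L in Ls) #|fam_minus_T_A fam T (A + L)%VS|)%N.
  apply: leq_trans (subset_leq_card sub) _.
  apply: leq_trans (leq_card_setU _ _) _.
  apply: leq_add => //; exact: card_bigcup_le.
have hN' : (#|fam_minus_T_A fam T A|%:R : rat) <= 1 + \sum_(L in Ls) (#|fam_minus_T_A fam T (A + L)%VS|%:R : rat).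
  by rewrite -natr_sum -(natrD _ 1) ler_nat.
apply: (Order.POrderTheory.le_trans hN'); rewrite lerD2l.
have hs : \sum_(L in Ls) (#|fam_minus_T_A fam T (A + L)%VS|%:R : rat) <= \sum_(L in Ls) M.
  apply: ler_sum => L; rewrite inE => /andP[/andP[_ LZ] /eqP dL]; apply: hB; first exact: addvSl.
  rewrite dimv_disjoint_sum; first by rewrite dL dimv0 addn1.
  apply/eqP; rewrite -subv0 -ZA capvS //.
apply: (Order.POrderTheory.le_trans hs).
by rewrite sumr_const -mulr_natl cLs.
Qed.
End Main.

Section Final.
Variables (F : finFieldType) (vT : vectType F).
Local Notation q := #|F|.
Local Notation ple := Order.POrderTheory.le_trans.

Lemma main_ind n k t (fam : {set {vspace vT}}) T :
  (t < k)%N -> \dim (fullv : {vspace vT}) = n ->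
  (forall X, X \in fam -> \dim X = k) -> almost_t_intersecting t fam ->
  (tau t fam < k)%N ->
  (forall W : {vspace vT}, t_cover t fam W -> \dim W = tau t fam -> W = T) ->
  forall a A, (\dim A + a = tau t fam)%N -> (t <= \dim A)%N ->
  (#|fam_minus_T_A fam T A|%:R : rat) <=
    gbin q (k - t + 1) 1 ^+ (a + 1) * gbin q (n - tau t fam - 1) (k - tau t fam - 1)
    + \sum_(i < a.+1) gbin q (k - t + 1) 1 ^+ i.
Proof.
move=> tk dimV dimk ati tauk uniq.
set c := gbin q (k - t + 1) 1; set G := gbin q (n - tau t fam - 1) (k - tau t fam - 1).
have q0 : (0 < q)%N by apply: ltnW; exact: q_gt1.
have c0 : 0 <= c by exact: gbin_ge0.
have G0 : 0 <= G by exact: gbin_ge0.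
elim=> [|a IH] A dA tA.
  rewrite addn0 in dA.
  have [-> | neq] := eqVneq A T.
    have -> : fam_minus_T_A fam T T = set0.
      by apply/setP => X; rewrite !inE; case: (T <= X)%VS; rewrite ?andbF.
    rewrite cards0; apply: addr_ge0; first by apply: mulr_ge0 => //; exact: exprn_ge0.
    by apply: sumr_ge0 => i _; exact: exprn_ge0.
  have ncov : ~~ t_cover t fam A.
    by apply/negP => cov; move/eqP: neq; apply; apply: uniq.
  apply: (ple (@step F vT k t fam T A G dimk ati tk tA ncov _)); last first.
    by rewrite -/c big_ord1 expr0 add0n expr1 addrC.
  move=> B AB dB.
  have sB : fam_minus_T_A fam T B \subset
     [set X : {vspace vT} | (B <= X)%VS && (X <= fullv)%VS && (\dim X == \dim B + (k - tau t fam).-1)%N].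
    apply/subsetP => X; rewrite !inE => /andP[Xf /andP[_ BX]].
    rewrite BX subvf dimk // dB dA; apply/eqP; lia.
  have -> : G = gbin q (n - \dim B) (k - tau t fam).-1.
    by rewrite /G dB dA; congr gbin; lia.
  by rewrite -dimV -(count_sub _ (subvf B)) ler_nat subset_leq_card.
have lt : (\dim A < tau t fam)%N by lia.
have ncov : ~~ t_cover t fam A.
  by apply/negP => /tau_le; rewrite leqNgt lt.
apply: (ple (@step F vT k t fam T A (c ^+ (a + 1) * G + \sum_(i < a.+1) c ^+ i) dimk ati tk tA ncov _)); last first.
  rewrite -/c [in X in _ <= X]big_ord_recl expr0.
  rewrite [in X in _ <= X](eq_bigr (fun i : 'I_a.+1 => c * c ^+ i)); last by move=> i _; rewrite -exprS.
  rewrite !addn1 !exprS mulrDr addrCA !mulrA.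
  by rewrite -mulr_sumr.
move=> B AB dB; apply: IH; lia.
Qed.
End Final.

Unset Implicit Arguments.

Theorem lemma5p1 (F : finFieldType) (vT : vectType F) (n k t : nat)
  (fam : {set {vspace vT}}) (T A : {vspace vT}) :
  (0 < n)%N -> (0 < k)%N -> (0 < t)%N -> (t.+1 <= k)%N -> (2 * k <= n)%N ->
  \dim (fullv : {vspace vT}) = n ->
  (forall X, X \in fam -> \dim X = k) ->
  almost_t_intersecting t fam ->
  (tau t fam < k)%N ->
  t_cover t fam T -> \dim T = tau t fam ->
  (forall W : {vspace vT}, t_cover t fam W -> \dim W = tau t fam -> W = T) ->
  (\dim A < tau t fam)%N -> (t <= \dim (A :&: T)%VS)%N ->
  (#|fam_minus_T_A fam T A|%:R : rat) <=
    gbin #|F| (k - t + 1) 1 ^+ (tau t fam - \dim A + 1)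
      * gbin #|F| (n - tau t fam - 1) (k - tau t fam - 1)
    + \sum_(i < (tau t fam - \dim A).+1) gbin #|F| (k - t + 1) 1 ^+ i.
Proof.
move=> _ _ _ tk _ dimV dimk ati tauk _ _ uniq lt tAT.
have tA : (t <= \dim A)%N := leq_trans tAT (dimvS (capvSl A T)).
apply: (main_ind tk dimV dimk ati tauk uniq) => //.
by rewrite subnKC // ltnW.
Qed.
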